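(* Let $t$ be a positive integer. For integers $m\ge 0$ and $n\ge 1$, let $g_t(m,n)$ denote the number of overpartitions of $n$ in which there are exactly $m$ overlined parts, the difference between the largest and the smallest part is at most $t$, and, if the difference between the largest and the smallest part is exactly $t$, then the largest part is not overlined. Then, as formal power series in $z$ and $q$, \[ \sum_{n\ge 1}\sum_{m\ge 0} g_t(m,n)z^mq^n=\frac{1}{1-q^t}\left(\frac{(-zq;q)_t}{(q;q)_t}-1\right). \]
   Context: An overpartition of a positive integer $n$ is a partition of $n$ (a weakly decreasing sequence of positive integers summing to $n$) in which the first occurrence of each distinct part size may be overlined. For comparisons of sizes, an overlined part $\overline{a}$ has value $a$. For a complex (or formal) $a$ and integer $n\ge 0$, $(a;q)_n=\prod_{k=0}^{n-1}(1-aq^k)$. *)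

(* Defs.v *)
From mathcomp Require Import all_boot all_order all_algebra.
Set Implicit Arguments. Unset Strict Implicit. Unset Printing Implicit Defensive.
Import Order.TTheory GRing.Theory Num.Theory.

(* An overpartition is a list of (part, overlined?) pairs. *)
Definition is_overpartition (n : nat) (s : seq (nat * bool)) : bool :=
  [&& sorted geq (map fst s),
      all (fun x => 0 < x.1) s,
      sumn (map fst s) == n &
      (* only the first occurrence of a part size may be overlined *)
      [forall i : 'I_(size s), (nth (0, false) s i).2 ==>
         [forall j : 'I_(size s), (j < i) ==>
            ((nth (0, false) s j).1 != (nth (0, false) s i).1)]]].

Definition largest_part (s : seq (nat * bool)) : nat := head 0 (map fst s).
Definition smallest_part (s : seq (nat * bool)) : nat := last 0 (map fst s).

Definition g_cond (t m : nat) (s : seq (nat * bool)) : bool :=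
  [&& count snd s == m,
      largest_part s - smallest_part s <= t &
      (largest_part s - smallest_part s == t) ==>
        all (fun x => (x.1 == largest_part s) ==> ~~ x.2) s].

(* g_t(m,n): every overpartition of n has at most n parts, each <= n, so it is
   encoded (injectively, surjectively) by a k-tuple over 'I_n.+1 * bool, k <= n. *)
Definition g (t m n : nat) : nat :=
  \sum_(k < n.+1)
    #|[pred s : k.-tuple ('I_n.+1 * bool) |
        let s' := [seq (nat_of_ord x.1, x.2) | x <- s] in
        is_overpartition n s' && g_cond t m s']|.

Local Open Scope ring_scope.

Definition fps := nat -> {poly int}.   (* n |-> coefficient of q^n (a poly in z) *)

Definition fone : fps := fun n => (n == 0%N)%:R.
Definition fsub (f h : fps) : fps := fun n => f n - h n.
Definition fmul (f h : fps) : fps := fun n => \sum_(i < n.+1) f i * h (n - i)%N.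
Definition ofpoly (p : {poly {poly int}}) : fps := fun n => p`_n.
(* the expansion of 1/(1 - q^j) = sum_k q^(jk), for j >= 1 *)
Definition geom (j : nat) : fps := fun n => (j %| n)%:R.

(* (a;q)_n = prod_{k<n} (1 - a q^k), with q = 'X (outer variable) *)
Definition qpoch (a : {poly {poly int}}) (n : nat) : {poly {poly int}} :=
  \prod_(k < n) (1 - a * 'X^k).

Definition zvar : {poly {poly int}} := ('X : {poly int})%:P.

(* 1/(q;q)_t = prod_{k=1}^t 1/(1 - q^k) *)
Fixpoint inv_qq (t : nat) : fps :=
  match t with
  | 0 => fone
  | t'.+1 => fmul (inv_qq t') (geom t'.+1)
  end.

Definition rhs (t : nat) : fps :=
  fmul (geom t)
       (fsub (fmul (ofpoly (qpoch (- (zvar * 'X)) t)) (inv_qq t)) fone).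

(* Main.v *)
Require Import Defs.
From mathcomp Require Import all_boot all_order all_algebra.
From mathcomp Require Import zify ring.
Set Implicit Arguments. Unset Strict Implicit. Unset Printing Implicit Defensive.

Module PartA.

Definition conv N (s : seq ('I_N.+1 * bool)) : seq (nat * bool) :=
  [seq (nat_of_ord x.1, x.2) | x <- s].

Definition LL N k : seq (seq (nat * bool)) :=
  [seq conv (val s) | s <- enum {: k.-tuple ('I_N.+1 * bool)}].

Definition UU N := flatten [seq LL N k | k <- iota 0 N.+1].

Definition bnd N (s : seq (nat * bool)) := (size s <= N) && all (fun x => x.1 <= N) s.

Lemma conv_inj N : injective (@conv N).
Proof.
elim=> [|x s IH] [|y s'] //= [] e1 e2 e3.
by rewrite (IH _ e3); case: x y e1 e2 {e3} => [a b] [c d] /= /ord_inj -> ->.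
Qed.

Lemma LL_uniq N k : uniq (LL N k).
Proof.
rewrite map_inj_uniq ?enum_uniq // => s1 s2 /conv_inj; exact: val_inj.
Qed.

Lemma mem_LL N k s : (s \in LL N k) = (size s == k) && all (fun x => x.1 <= N) s.
Proof.
apply/mapP/andP.
  case=> u _ ->; split; first by rewrite size_map size_tuple.
  by apply/allP=> x /mapP [y _ ->] /=; rewrite -ltnS ltn_ord.
case=> /eqP hs /allP ha.
pose s' := [seq ((inord x.1 : 'I_N.+1), x.2) | x <- s].
have hs' : size s' == k by rewrite size_map hs.
exists (Tuple hs'); first by rewrite mem_enum.
rewrite /conv /= -map_comp -[LHS]map_id; apply/eq_in_map => x /ha hx /=.
by rewrite inordK //; case: x hx.
Qed.

Lemma size_LL N k s : s \in LL N k -> size s = k.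
Proof. by rewrite mem_LL => /andP [/eqP]. Qed.

Lemma UU_uniq_gen N ks : uniq ks -> uniq (flatten [seq LL N k | k <- ks]).
Proof.
elim: ks => [|k ks IH] //= /andP [kn u].
rewrite cat_uniq LL_uniq IH // andbT; apply/hasP => -[s /flattenP [s0 /mapP [k' k'in ->]] sin].
move=> /size_LL hk; move: sin => /size_LL hk'.
by move: kn; rewrite -hk hk' k'in.
Qed.

Lemma UU_uniq N : uniq (UU N).
Proof. exact/UU_uniq_gen/iota_uniq. Qed.

Lemma mem_UU N s : (s \in UU N) = bnd N s.
Proof.
apply/flattenP/andP.
  case=> s0 /mapP [k kin ->]; rewrite mem_LL => /andP [/eqP hs ha]; split=> //.
  by move: kin; rewrite mem_iota -hs.
case=> h1 h2; exists (LL N (size s)); last by rewrite mem_LL eqxx.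
by apply/mapP; exists (size s) => //; rewrite mem_iota.
Qed.

Definition cnt N (P : pred (seq (nat * bool))) := count P (UU N).

Lemma cnt_g t m n :
  g t m n = cnt n (fun s => is_overpartition n s && g_cond t m s).
Proof.
rewrite /g /cnt /UU count_flatten -map_comp sumnE big_map.
rewrite (_ : iota 0 n.+1 = index_iota 0 n.+1) ?big_mkord; last by rewrite /index_iota subn0.
apply: eq_bigr => k _ /=.
rewrite cardE /LL count_map /enum_mem size_filter.
rewrite (_ : filter _ _ = Finite.enum (k.-tuple ('I_n.+1 * bool))); last by apply/all_filterP/allP.
by apply: eq_count.
Qed.

Lemma cnt_bij N1 N2 (P Q : pred (seq (nat * bool))) f h :
  (forall s, P s -> bnd N1 s) -> (forall s, Q s -> bnd N2 s) ->
  (forall s, P s -> Q (f s)) -> (forall s, Q s -> P (h s)) ->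
  (forall s, P s -> h (f s) = s) -> (forall s, Q s -> f (h s) = s) ->
  cnt N1 P = cnt N2 Q.
Proof.
move=> bP bQ PQ QP hf fh.
rewrite /cnt -!size_filter -(size_map h (filter Q _)).
apply/perm_size/uniq_perm; first exact/filter_uniq/UU_uniq.
  rewrite map_inj_in_uniq; first exact/filter_uniq/UU_uniq.
  move=> x y; rewrite !mem_filter => /andP [qx _] /andP [qy _] e.
  by rewrite -(fh _ qx) -(fh _ qy) e.
move=> s; rewrite mem_filter mem_UU; apply/andP/mapP.
  case=> ps _; exists (f s); last by rewrite hf.
  by rewrite mem_filter mem_UU PQ // bQ // PQ.
case=> y; rewrite mem_filter mem_UU => /andP [qy _] ->; split; first exact: QP.
exact/bP/QP.
Qed.

Lemma cnt0 N (P : pred (seq (nat * bool))) : (forall s, ~~ P s) -> cnt N P = 0.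
Proof. by move=> h; apply/eqP; rewrite /cnt -leqn0 leqNgt -has_count; apply/hasP=> -[s _]; rewrite (negbTE (h s)). Qed.

Lemma cnt_ext N (P Q : pred (seq (nat * bool))) : P =1 Q -> cnt N P = cnt N Q.
Proof. by move=> e; apply: eq_count. Qed.

Lemma cnt_split N (P A : pred (seq (nat * bool))) :
  cnt N P = cnt N (predI P A) + cnt N (predI P (predC A)).
Proof.
rewrite /cnt; elim: (UU N) => //= x s ->.
by case: (P x); case: (A x) => /=; rewrite ?addnS ?addSn.
Qed.

Lemma cnt_nil N : cnt N (pred1 [::]) = 1.
Proof. by rewrite /cnt count_uniq_mem ?UU_uniq // mem_UU. Qed.

End PartA.
Import PartA.

Module PartB.

Notation T := (nat * bool)%type.

Fixpoint okL (s : seq T) : bool :=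
  if s is x :: r then all (fun y => y.2 ==> (y.1 != x.1)) r && okL r else true.

Definition srt (s : seq T) := sorted geq (map fst s).

Lemma okP_okL s :
  reflect (forall i j, i < size s -> j < i -> (nth (0,false) s i).2 ->
             (nth (0,false) s j).1 != (nth (0,false) s i).1) (okL s).
Proof.
elim: s => [|x r IH] /=; first by constructor.
apply: (iffP andP).
  case=> /all_nthP ha /IH hr [|i] [|j] //= hi hj hb.
    by have := ha (0,false) i hi; rewrite hb /= eq_sym.
  by apply: hr.
move=> h; split.
  apply/(all_nthP (0,false)) => i hi; apply/implyP => hb.
  by rewrite eq_sym; apply: (h i.+1 0).
by apply/IH => i j hi hj hb; apply: (h i.+1 j.+1).
Qed.

Lemma isop_E n s : is_overpartition n s =
  [&& srt s, all (fun x => 0 < x.1) s, sumn (map fst s) == n & okL s].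
Proof.
rewrite /is_overpartition /srt; congr [&& _, _, _ & _].
apply/forallP/okP_okL.
  move=> h i j hi hj hb.
  have := h (Ordinal hi); rewrite hb /= => /forallP /(_ (Ordinal (ltn_trans hj hi))).
  by rewrite /= hj.
move=> h i; apply/implyP => hb; apply/forallP => j; apply/implyP => hj.
exact: h.
Qed.

Lemma srt_cons x r : srt (x :: r) = all (fun z => z.1 <= x.1) r && srt r.
Proof.
rewrite /srt /= path_sortedE ?all_map //.
by move=> a b c h1 h2; apply: leq_trans h2 h1.
Qed.

Lemma srt_rcons r y : srt (rcons r y) = srt r && all (fun z => y.1 <= z.1) r.
Proof.
rewrite /srt map_rcons -rev_sorted rev_rcons /= path_sortedE; last first.
  by move=> a b c h1 h2; apply: leq_trans h1 h2.
rewrite all_rev all_map rev_sorted andbC; congr (_ && _).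
Qed.

Lemma okL_rcons r y : okL (rcons r y) = okL r && (y.2 ==> (y.1 \notin map fst r)).
Proof.
elim: r => [|x r IH] /=; first by case: y => a [].
rewrite IH all_rcons in_cons negb_or.
by case: (y.2); case: (all _ r); case: (okL r); case: (y.1 == x.1); case: (y.1 \in _).
Qed.

Lemma sumn_rcons (r : seq nat) a : sumn (rcons r a) = sumn r + a.
Proof. by rewrite -cats1 sumn_cat /= addn0. Qed.

Lemma srt_hd s : srt s -> all (fun z => z.1 <= largest_part s) s.
Proof.
case: s => [|x r] //; rewrite srt_cons /largest_part /= leqnn => /andP [h _] //.
Qed.

Lemma srt_lst s : srt s -> all (fun z => smallest_part s <= z.1) s.
Proof.
elim/last_ind: s => [|r y _] //; rewrite srt_rcons /smallest_part map_rcons last_rcons.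
by rewrite all_rcons leqnn => /andP [_ ->].
Qed.

Lemma op_bnd n s : is_overpartition n s -> bnd n s.
Proof.
rewrite isop_E => /and4P [_ hp /eqP <- _]; rewrite /bnd.
elim: s hp => [|x r IH] //= /andP [hx /IH /andP [h1 h2]].
apply/andP; split; first by rewrite -(prednK hx) addSn ltnS (leq_trans h1 (leq_addl _ _)).
rewrite leq_addr /=.
by apply: sub_all h2 => z /= h; apply: leq_trans h (leq_addl _ _).
Qed.

End PartB.
Import PartB.

Module PartC.

Definition Gp t m n (s : seq T) := is_overpartition n s && g_cond t m s.

Definition rot t (s : seq T) := if s is x :: r then rcons r (x.1 - t, x.2) else [::].
Definition unrot t (s : seq T) :=
  if s is x :: r then let y := last x r in (y.1 + t, y.2) :: belast x r else [::].

Lemma unrot_rcons t r y : unrot t (rcons r y) = (y.1 + t, y.2) :: r.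
Proof. by case: r => [|a r] //=; rewrite last_rcons belast_rcons. Qed.

Lemma count_rcons' (a : pred T) r y : count a (rcons r y) = count a r + a y.
Proof. by rewrite -cats1 count_cat /= addn0. Qed.

Lemma rot_ok t m n s : 0 < t -> t < n -> Gp t m n s -> t < largest_part s ->
  Gp t m (n - t) (rot t s).
Proof.
move=> ht htn; case: s => [|[p b] r] //.
rewrite /Gp isop_E => /andP [/and4P [hs hpos /eqP hsum hok] hg].
have hl := srt_lst hs.
move: hs hpos hok hg hl; rewrite srt_cons /= /g_cond /largest_part /smallest_part /=.
move=> /andP [hall hsr] /andP [hp0 hpos] /andP [hok1 hok2] /and3P [/eqP hc hd hi].
move=> /andP [_ hl] hp.
set l := last p (map fst r) in hd hi hl.
rewrite isop_E srt_rcons okL_rcons /= map_rcons sumn_rcons all_rcons hsr hok2 hpos /=.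
have -> : all (fun z : T => p - t <= z.1) r.
  by apply: sub_all hl => z /= hz; lia.
have -> : 0 < p - t by lia.
have -> : sumn (map fst r) + (p - t) == n - t by move: hsum => /= <-; apply/eqP; lia.
have -> : b ==> (p - t \notin map fst r).
  apply/implyP => hb; apply/negP => /mapP [z zin ze].
  have := allP hl z zin; rewrite -ze => hlz.
  have hlt : p - l == t by apply/eqP; lia.
  by move: hi; rewrite hlt /= eqxx hb.
rewrite count_rcons' /= addnC hc eqxx /= last_rcons.
case: r hall hok1 {hsr hok2 hpos hsum hl l hd hi hc} => [|z r'] /=.
  by move=> _ _; rewrite subnn /=; rewrite eq_sym (negbTE (lt0n_neq0 ht)).
move=> /andP [hz hall] /andP [hz2 hok1].
apply/andP; split; first by apply/leP; lia.
apply/implyP => /eqP e; have zp : z.1 = p by lia.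
rewrite eqxx /= all_rcons /= zp.
have -> : (p - t == p) = false by apply/negbTE; apply/eqP; lia.
rewrite /=; apply/andP; split; first by move: hz2; rewrite zp eqxx implybF.
by apply/allP => x xin; move: (allP hok1 x xin); case: (x.2); case: (x.1 == p).
Qed.

Lemma unrot_ok t m n s : 0 < t -> t < n -> Gp t m (n - t) s ->
  Gp t m n (unrot t s) && (t < largest_part (unrot t s)).
Proof.
move=> ht htn; case/lastP: s => [|r [a c]].
  by rewrite /Gp isop_E /= eq_sym subn_eq0 leqNgt htn.
rewrite unrot_rcons /Gp isop_E => /andP [/and4P [hs hpos /eqP hsum hok] hg].
have hM := srt_hd hs.
move: hg; rewrite /g_cond => /and3P [/eqP hc hd hi].
set M := largest_part _ in hM hd hi.
rewrite /smallest_part map_rcons last_rcons /= in hd hi.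
move: hs hpos hok hsum hM; rewrite srt_rcons okL_rcons all_rcons map_rcons sumn_rcons all_rcons /=.
move=> /andP [hsr hge] /andP [ha hpos] /andP [hok hc2] hsum /andP [haM hrM].
have hzM : forall z, z \in r -> z.1 = a + t -> ~~ z.2.
  move=> z zin e; have := allP hrM z zin; rewrite e => h1.
  have eM : M - a == t by apply/eqP; lia.
  move: hi; rewrite eM /= => /allP /(_ z); rewrite mem_rcons in_cons zin orbT => /(_ isT).
  by have -> : z.1 == M by apply/eqP; lia.
rewrite /largest_part /= isop_E srt_cons /= hsr hpos hok addn_gt0 ha.
have -> : all (fun z : T => z.1 <= a + t) r by apply: sub_all hrM => z /= hz; lia.
have -> : a + t + sumn (map fst r) == n by apply/eqP; lia.
have -> : all (fun y : T => y.2 ==> (y.1 != a + t)) r.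
  by apply/allP => z zin; apply/implyP => z2; apply/eqP => e; move: (hzM z zin e); rewrite z2.
rewrite -hc count_rcons' /= addnC eqxx /= eqxx /=.
have -> : t < a + t by lia.
rewrite /smallest_part /= andbT.
have hL : last (a + t) (map fst r) \in (a + t) :: map fst r by apply: mem_last.
have hLa : a <= last (a + t) (map fst r).
  move: hL; rewrite in_cons => /orP [/eqP -> | /mapP [z zin ->]]; first exact: leq_addr.
  exact: (allP hge z zin).
apply/andP; split; first by apply/leP; lia.
apply/implyP => /eqP e.
have eL : last (a + t) (map fst r) = a by lia.
have aL : a \in map fst r.
  move: hL; rewrite eL in_cons => /orP [/eqP h|] //; lia.
move: hc2; rewrite aL implybF => -> /=.
by apply/allP => z zin; apply/implyP => /eqP ez; apply: hzM.
Qed.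

Definition Hp t m n (s : seq T) :=
  [&& is_overpartition n s, count snd s == m & all (fun x => x.1 <= t) s].
Definition Hc t m n := cnt n (Hp t m n).

Lemma mem_sumn (l : seq nat) x : x \in l -> x <= sumn l.
Proof.
elim: l => [|y l IH] //=; rewrite in_cons => /orP [/eqP -> | /IH h]; first exact: leq_addr.
exact: leq_trans h (leq_addl _ _).
Qed.

Lemma isop_nil n s : is_overpartition n s -> 0 < n -> s != [::].
Proof.
move=> h hn; apply/negP => /eqP e; move: h; rewrite e isop_E => /and4P [_ _ /eqP h _].
by move: hn; rewrite -h.
Qed.

Lemma hd_mem s : s != [::] -> largest_part s \in map fst s.
Proof. by case: s => //= x r _; rewrite in_cons eqxx. Qed.

Lemma lst_mem s : s != [::] -> smallest_part s \in map fst s.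
Proof. by case: s => //= x r _; rewrite /smallest_part /= mem_last. Qed.

Lemma g_rec t m n : 0 < t -> 0 < n ->
  g t m n = Hc t m n + (if t < n then g t m (n - t) else 0).
Proof.
move=> ht hn; rewrite !cnt_g (cnt_split _ _ (fun s => largest_part s <= t)).
congr (_ + _).
  apply: cnt_ext => s /=; rewrite /Hp.
  case hop: (is_overpartition n s) => //=.
  have hne := isop_nil hop hn.
  move: hop; rewrite isop_E => /and4P [hs hpos _ _].
  have hM := srt_hd hs.
  rewrite /g_cond; case: (count snd s == m) => //=.
  apply/idP/idP.
    move=> /andP [_ hMt]; by apply: sub_all hM => z /= hz; apply: leq_trans hz hMt.
  move=> hall; have hMt : largest_part s <= t.
    by move: (hd_mem hne) => /mapP [z zin ->]; exact: (allP hall z zin).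
  have hl : 0 < smallest_part s.
    by move: (lst_mem hne) => /mapP [z zin ->]; exact: (allP hpos z zin).
  rewrite hMt andbT.
  have -> : largest_part s - smallest_part s == t = false by apply/negbTE; apply/eqP; lia.
  by rewrite /= andbT; apply/leP; lia.
case: ifP => htn; last first.
  apply: cnt0 => s /=; apply/negP => /andP [/andP [hop _] hM].
  have hne := isop_nil hop hn.
  move: hop; rewrite isop_E => /and4P [_ _ /eqP hsum _].
  have := mem_sumn (hd_mem hne); rewrite hsum => h.
  by move: hM htn; rewrite -ltnNge => h1 /negbT; rewrite -leqNgt => h2; have := leq_ltn_trans h2 h1; rewrite ltnNge h.
apply: (@cnt_bij _ _ _ _ (rot t) (unrot t)).
- by move=> s /andP [/andP [/op_bnd]].
- by move=> s /andP [/op_bnd].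
- move=> s /andP [hG hM]; apply: rot_ok => //; by rewrite ltnNge.
- move=> s hG; have /andP [h1 h2] := unrot_ok ht htn hG.
  by rewrite /= -ltnNge h2 andbT.
- move=> [|x r] /=; first by move=> /andP [_]; rewrite /largest_part.
  move=> /andP [_]; rewrite /largest_part /= -ltnNge => hx.
  by rewrite unrot_rcons /= subnK ?(ltnW hx) //; case: x hx.
- move=> s hG; have hne : s != [::].
    apply: isop_nil (proj1 (andP hG)) _; lia.
  case/lastP: s hne {hG} => // r y _; rewrite unrot_rcons /= addnK; by case: y.
Qed.

End PartC.
Import PartC.

Module PartD.

Lemma Hp_consE j m n (x : T) r : Hp j m n (x :: r) ->
  all (fun z => z.1 <= x.1) r /\ srt r /\ 0 < x.1 /\ all (fun z => 0 < z.1) r /\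
      x.1 + sumn (map fst r) = n /\ all (fun y => y.2 ==> (y.1 != x.1)) r /\ okL r /\
      x.2 + count snd r = m /\ x.1 <= j /\ all (fun z => z.1 <= j) r.
Proof.
rewrite /Hp isop_E srt_cons /=.
by move=> /and3P [/and4P [/andP [h1 h2] /andP [h3 h4] /eqP h5 /andP [h6 h7]] /eqP h8 /andP [h9 h10]]; do !split.
Qed.

Lemma Hp_consI j m n (x : T) r :
  all (fun z => z.1 <= x.1) r -> srt r -> 0 < x.1 -> all (fun z => 0 < z.1) r ->
  x.1 + sumn (map fst r) = n -> all (fun y => y.2 ==> (y.1 != x.1)) r -> okL r ->
  x.2 + count snd r = m -> x.1 <= j -> all (fun z => z.1 <= j) r -> Hp j m n (x :: r).
Proof.
move=> h1 h2 h3 h4 h5 h6 h7 h8 h9 h10.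
rewrite /Hp isop_E srt_cons /= h1 h2 h3 h4 h6 h7 h9 h10 /= andbT.
by apply/and3P; split => //; apply/eqP.
Qed.

Lemma Hp_nilE j m n : Hp j m n [::] = (n == 0) && (m == 0).
Proof. by rewrite /Hp isop_E /=; case: n; case: m. Qed.

Lemma hd_le_all s j : all (fun z : T => z.1 <= j) s -> largest_part s <= j.
Proof. by case: s => [|x r] //= /andP []. Qed.

Definition A1 t (s : seq T) := largest_part s == t.+1.
Definition A2 t (s : seq T) := (head (0, false) s).2 && (largest_part (behead s) != t.+1).

Lemma Hc_low t m n :
  cnt n (predI (Hp t.+1 m n) (predC (A1 t))) = Hc t m n.
Proof.
apply: cnt_ext => -[|x r] /=; first by rewrite /A1 /= !Hp_nilE andbT.
rewrite /A1 /largest_part /=; apply/idP/idP.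
  move=> /andP [H hx].
  have [h1 [h2 [h3 [h4 [h5 [h6 [h7 [h8 [h9 h10]]]]]]]]] := Hp_consE H.
  have hxt : x.1 <= t by move: h9 hx; rewrite leq_eqVlt ltnS => /orP [->|].
  apply: Hp_consI => //; apply: sub_all h1 => z /= hz; exact: leq_trans hz hxt.
move=> H; have [h1 [h2 [h3 [h4 [h5 [h6 [h7 [h8 [h9 h10]]]]]]]]] := Hp_consE H.
apply/andP; split; last by apply/negP => /eqP e; move: h9; rewrite e ltnn.
apply: Hp_consI => //; first exact: leq_trans h9 (leqnSn _).
by apply: sub_all h10 => z /= hz; exact: leq_trans hz (leqnSn _).
Qed.

Lemma Hc_hi0 t m n : n <= t -> cnt n (predI (Hp t.+1 m n) (A1 t)) = 0.
Proof.
move=> hn; apply: cnt0 => -[|x r] /=; first by rewrite /A1 andbF.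
apply/negP => /andP [H]; rewrite /A1 /largest_part /= => /eqP e.
have [h1 [h2 [h3 [h4 [h5 _]]]]] := Hp_consE H.
by move: hn; rewrite -h5 e => hn; lia.
Qed.

Lemma Hc_A0 t n : cnt n (predI (predI (Hp t.+1 0 n) (A1 t)) (A2 t)) = 0.
Proof.
apply: cnt0 => -[|x r] /=; first by rewrite /A2 andbF.
apply/negP => /andP [/andP [H _]]; rewrite /A2 /= => /andP [hb _].
have [_ [_ [_ [_ [_ [_ [_ [h8 _]]]]]]]] := Hp_consE H.
by move: h8; rewrite hb.
Qed.

Lemma Hc_A t m n : t < n -> 0 < m ->
  cnt n (predI (predI (Hp t.+1 m n) (A1 t)) (A2 t)) = Hc t m.-1 (n - t.+1).
Proof.
move=> htn hm; apply: (@cnt_bij _ _ _ _ behead (cons (t.+1, true))).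
- by move=> s /andP [/andP [/and3P [/op_bnd]]].
- by move=> s /and3P [/op_bnd].
- move=> [|x r] /=; first by rewrite /A2 andbF.
  move=> /andP [/andP [H]]; rewrite /A1 /A2 /largest_part /= => /eqP hx /andP [hb hr].
  have [h1 [h2 [h3 [h4 [h5 [h6 [h7 [h8 [h9 h10]]]]]]]]] := Hp_consE H.
  rewrite /Hp isop_E h2 h4 h7 /=.
  have hrt : largest_part r <= t.
    move: hr; case: r H h1 {h2 h4 h5 h6 h7 h8 h10} => [|w r'] //= _ /andP [hw _].
    by rewrite /largest_part /= => hne; move: hw; rewrite hx leq_eqVlt ltnS (negbTE hne).
  have -> : sumn (map fst r) == n - t.+1 by apply/eqP; move: h5; rewrite hx; lia.
  have -> : count snd r == m.-1 by apply/eqP; move: h8; rewrite hb /=; lia.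
  by apply: sub_all (srt_hd h2) => z /= hz; exact: leq_trans hz hrt.
- move=> r H; rewrite /= /A1 /A2 /largest_part /= eqxx /=.
  move: H; rewrite /Hp isop_E => /and3P [/and4P [hs hp /eqP hsum hok] /eqP hc hall].
  apply/andP; split; last first.
    case: r hall {hs hp hsum hok hc} => [|w r'] //= /andP [hw _].
    by apply/negP => /eqP e; move: hw; rewrite e ltnn.
  apply/andP; split; last by []. 
  apply: Hp_consI => //=.
  + by apply: sub_all hall => z /= hz; exact: leq_trans hz (leqnSn _).
  + by lia.
  + by apply: sub_all hall => z /= hz; apply/implyP => _; apply/negP => /eqP e; move: hz; rewrite e ltnn.
  + by lia.
  + by apply: sub_all hall => z /= hz; exact: leq_trans hz (leqnSn _).
- move=> [|x r] /=; first by rewrite /A2 andbF.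
  move=> /andP [/andP [_]]; rewrite /A1 /A2 /largest_part /= => /eqP hx /andP [hb _].
  by case: x hx hb => a b /= -> ->.
- by [].
Qed.

Definition phi (s : seq T) :=
  if s is x :: r then (if r is y :: r' then (y.1, y.2 || x.2) :: r' else [::]) else [::].
Definition psi j (s : seq T) :=
  if s is y :: r' then (if y.1 == j then (j, y.2) :: (j, false) :: r' else (j, false) :: s)
  else [:: (j, false)].

Lemma phi_psi j s : phi (psi j s) = s.
Proof.
case: s => [|[a b] r] //=; case: ifP => [/eqP -> |] //=; by rewrite orbF.
Qed.

Lemma Hc_nA t m n : t < n ->
  cnt n (predI (predI (Hp t.+1 m n) (A1 t)) (predC (A2 t))) = Hc t.+1 m (n - t.+1).
Proof.
move=> htn; apply: (@cnt_bij _ _ _ _ phi (psi t.+1)).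
- by move=> s /andP [/andP [/and3P [/op_bnd]]].
- by move=> s /and3P [/op_bnd].
- move=> [|x r] /=; first by rewrite /A1 /largest_part /= andbF.
  move=> /andP [/andP [H]]; rewrite /A1 /A2 /largest_part /= => /eqP hx hA.
  have [h1 [h2 [h3 [h4 [h5 [h6 [h7 [h8 [h9 h10]]]]]]]]] := Hp_consE H.
  case: r hA h1 h2 h4 h5 h6 h7 h8 h10 {H} => [|w r'] /=.
    rewrite /largest_part /= andbT => hb _ _ _ h5 _ _ h8 _.
    by rewrite Hp_nilE; apply/andP; split; apply/eqP; move: h5 h8; rewrite (negbTE hb) hx /=; lia.
  rewrite /largest_part /= srt_cons.
  move=> hA /andP [hw1 h1] /andP [hw2 h2] /andP [hw4 h4] h5 /andP [hw6 h6] /andP [hw7 h7] h8 /andP [hw10 h10].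
  apply: Hp_consI => //=.
  + by move: h5; rewrite hx /=; lia.
  + by move: h8 hA hw6; rewrite hx; case: (x.2); case: (w.2); case: (w.1 == t.+1) => //=; lia.
- move=> [|y r'] H.
    rewrite Hp_nilE in H; case/andP: H => /eqP hn /eqP hm.
    rewrite /= /A1 /A2 /largest_part /= eqxx !andbT.
    by apply: Hp_consI => //=; lia.
  have [h1 [h2 [h3 [h4 [h5 [h6 [h7 [h8 [h9 h10]]]]]]]]] := Hp_consE H.
  rewrite /=; case: ifP => [/eqP hy|hy].
    rewrite /A1 /A2 /largest_part /= eqxx /= andbF andbT /= andbT.
    apply: Hp_consI => //=; rewrite ?srt_cons -?hy ?h1 ?h2 ?h4 ?h6 ?h7 ?h10 ?leqnn //=.
    move: h5; rewrite hy; lia.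
  rewrite /A1 /A2 /largest_part /= eqxx /= !andbT.
  have hyl : y.1 < t.+1 by rewrite ltn_neqAle hy h9.
  apply: Hp_consI => //=; rewrite ?srt_cons ?h1 ?h2 ?h3 ?h4 ?h6 ?h7 ?h9 ?h10 //=.
    by move: h5; lia.
  rewrite hy implybT /=; apply/allP => z zin; apply/implyP => _; apply/negP => /eqP e.
  by have := allP h1 z zin; rewrite e => hz; move: (leq_ltn_trans hz hyl); rewrite ltnn.
- move=> [|x r] /=; first by rewrite /A1 /largest_part /= andbF.
  move=> /andP [/andP [H]]; rewrite /A1 /A2 /largest_part /= => /eqP hx hA.
  have [_ [_ [_ [_ [_ [h6 _]]]]]] := Hp_consE H.
  case: r hA h6 {H} => [|w r'] /=.
    by rewrite /largest_part /= andbT; case: x hx => a [] //= ->.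
  rewrite /largest_part /= => hA /andP [hw6 _].
  case: ifP => [/eqP hw|hw].
    move: hw6; rewrite hw hx eqxx implybF => /negbTE hw2.
    by case: x hx {hA} => a b /= ->; case: w hw hw2 => c d /= -> ->.
  move: hA; rewrite hw /= andbT => /negbTE hb.
  by clear hw6; case: x hx hb => a b /= -> ->; rewrite orbF; case: w {hw}.
- by move=> s _; exact: phi_psi.
Qed.

Lemma Hc_rec t m n : Hc t.+1 m n = Hc t m n +
  (if t < n then Hc t.+1 m (n - t.+1) + (if 0 < m then Hc t m.-1 (n - t.+1) else 0) else 0).
Proof.
rewrite {1}/Hc (cnt_split _ _ (A1 t)) addnC Hc_low; congr (_ + _).
case: ifP => htn; last by apply: Hc_hi0; rewrite leqNgt htn.
rewrite (cnt_split _ _ (A2 t)) addnC Hc_nA //; congr (_ + _).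
by case: m => [|m] /=; [exact: Hc_A0 | exact: Hc_A].
Qed.

Lemma Hp0_cons m n x r : Hp 0 m n (x :: r) = false.
Proof.
apply/negP => H; have [_ [_ [h3 [_ [_ [_ [_ [_ [h9 _]]]]]]]]] := Hp_consE H.
by move: h3; rewrite lt0n -leqn0 h9.
Qed.

Lemma Hc0 m n : Hc 0 m n = ((n == 0) && (m == 0)).
Proof.
case e: ((n == 0) && (m == 0)).
  rewrite /Hc /= -(cnt_nil n); apply: cnt_ext => -[|x r]; first by rewrite Hp_nilE e.
  by rewrite Hp0_cons.
by apply: cnt0 => -[|x r]; rewrite ?Hp_nilE ?e ?Hp0_cons.
Qed.

End PartD.
Import PartD.

Module PartE.
Import GRing.Theory.
Local Open Scope ring_scope.

Notation PP := {poly {poly int}}.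

Record peq (N : nat) (A B : PP) : Prop := Peq { peqP : forall i, (i <= N)%N -> A`_i = B`_i }.
Definition emb (N : nat) (f : fps) : PP := \poly_(i < N.+1) f i.

Lemma coef_emb N f i : (emb N f)`_i = if (i <= N)%N then f i else 0.
Proof. by rewrite coef_poly. Qed.

Lemma peq_refl N A : peq N A A. Proof. by constructor. Qed.
Lemma peq_sym N A B : peq N A B -> peq N B A.
Proof. by move=> [h]; constructor=> i hi; rewrite h. Qed.
Lemma peq_trans N A B C : peq N A B -> peq N B C -> peq N A C.
Proof. by move=> [h1] [h2]; constructor=> i hi; rewrite h1 ?h2. Qed.

Lemma peq_mul N A A' B B' : peq N A A' -> peq N B B' -> peq N (A * B) (A' * B').
Proof.
move=> [hA] [hB]; constructor=> i hi; rewrite !coefM; apply: eq_bigr => k _.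
have hk : (k <= N)%N by apply: leq_trans hi; rewrite -ltnS.
rewrite hA // hB //; apply: leq_trans hi; exact: leq_subr.
Qed.

Lemma peq_add N A A' B B' : peq N A A' -> peq N B B' -> peq N (A + B) (A' + B').
Proof. by move=> [hA] [hB]; constructor=> i hi; rewrite !coefD hA ?hB. Qed.

Lemma emb_fmul N f h : peq N (emb N (fmul f h)) (emb N f * emb N h).
Proof.
constructor=> i hi; rewrite coef_emb hi coefM /fmul; apply: eq_bigr => k _.
have hk : (k <= N)%N by apply: leq_trans hi; rewrite -ltnS.
rewrite !coef_emb hk (leq_trans (leq_subr _ _) hi) //.
Qed.

Lemma emb_ofpoly N P : peq N (emb N (ofpoly P)) P.
Proof. by constructor=> i hi; rewrite coef_emb hi. Qed.

Lemma emb_fone N : peq N (emb N fone) 1.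
Proof. by constructor=> i hi; rewrite coef_emb hi coef1. Qed.

Lemma emb_fsub N f h : peq N (emb N (fsub f h)) (emb N f - emb N h).
Proof. by constructor=> i hi; rewrite coefB !coef_emb hi. Qed.

Lemma emb_geom N j : (0 < j)%N -> peq N ((1 - 'X^j) * emb N (geom j)) 1.
Proof.
move=> hj; constructor=> i hi; rewrite mulrBl mul1r coefB coefXnM !coef_emb hi coef1 /geom.
case: ltnP => hij.
  rewrite subr0; congr (_ %:R); case: i hij {hi} => [|i] hij; first by rewrite dvdn0.
  by have -> : (j %| i.+1)%N = false by apply/negbTE/negP => /dvdn_leq h; move: hij; rewrite ltnNge h.
rewrite (leq_trans (leq_subr _ _) hi) dvdn_subl ?dvdnn // subrr.
by case: i hij {hi} => // ; rewrite leqn0 => /eqP e; move: hj; rewrite e.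
Qed.

Definition aa : PP := - (zvar * 'X).
Definition Fq t : fps := fmul (ofpoly (qpoch aa t)) (inv_qq t).

Lemma qpochS t : qpoch aa t.+1 = qpoch aa t * (1 + zvar * 'X^(t.+1)).
Proof. by rewrite /qpoch big_ord_recr /= /aa mulNr opprK exprS mulrA. Qed.

Lemma Fq_eqn t N : peq N (emb N (Fq t)) (qpoch aa t * emb N (inv_qq t)).
Proof. rewrite /Fq. apply: peq_trans; first exact: emb_fmul. apply: peq_mul; [exact: emb_ofpoly | exact: peq_refl]. Qed.

Lemma F_rec t n :
  Fq t.+1 n - (if (n < t.+1)%N then 0 else Fq t.+1 (n - t.+1)%N) =
  Fq t n + 'X * (if (n < t.+1)%N then 0 else Fq t (n - t.+1)%N).
Proof.
set j := t.+1.
have H : peq n ((1 - 'X^j) * emb n (Fq j)) ((1 + zvar * 'X^j) * emb n (Fq t)).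
  apply: (@peq_trans _ _ ((1 - 'X^j) * (qpoch aa j * emb n (inv_qq j)))).
    apply: peq_mul; [exact: peq_refl | exact: Fq_eqn].
  apply: (@peq_trans _ _ ((1 - 'X^j) * (qpoch aa j * (emb n (inv_qq t) * emb n (geom j))))).
    apply: peq_mul; first exact: peq_refl.
    apply: peq_mul; first exact: peq_refl.
    exact: emb_fmul.
  apply: (@peq_trans _ _ ((1 + zvar * 'X^j) * (qpoch aa t * emb n (inv_qq t)))); last first.
    apply: peq_mul; first exact: peq_refl.
    apply: peq_sym; exact: Fq_eqn.
  rewrite qpochS.
  have -> : (1 - 'X^j) * (qpoch aa t * (1 + zvar * 'X^j) * (emb n (inv_qq t) * emb n (geom j)))
     = ((1 + zvar * 'X^j) * (qpoch aa t * emb n (inv_qq t))) * ((1 - 'X^j) * emb n (geom j)).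
    by ring.
  rewrite -[X in peq _ _ X]mulr1; apply: peq_mul; [exact: peq_refl | exact: emb_geom].
have := peqP H (leqnn n).
rewrite mulrBl mul1r coefB coefXnM !coef_emb leqnn leq_subr mulrDl mul1r coefD -mulrA.
rewrite coef_emb leqnn /zvar coefCM coefXnM coef_emb leq_subr => ->.
by case: ifP => _; rewrite ?mulr0.
Qed.

Lemma rhs_rec t n : (0 < t)%N ->
  rhs t n - (if (n < t)%N then 0 else rhs t (n - t)%N) = Fq t n - (n == 0%N)%:R.
Proof.
move=> ht.
have H : peq n ((1 - 'X^t) * emb n (rhs t)) (emb n (Fq t) - emb n fone).
  apply: (@peq_trans _ _ ((1 - 'X^t) * (emb n (geom t) * emb n (fsub (Fq t) fone)))).
    apply: peq_mul; first exact: peq_refl.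
    exact: emb_fmul.
  rewrite mulrA -[X in peq _ _ X]mul1r; apply: peq_mul; first exact: emb_geom.
  exact: emb_fsub.
have := peqP H (leqnn n).
rewrite mulrBl mul1r coefB coefXnM !coef_emb leqnn leq_subr coefB !coef_emb leqnn => ->.
by [].
Qed.

End PartE.
Import PartE.

Module PartF.
Import GRing.Theory.

Lemma Hp_n0_cons j m x r : Hp j m 0 (x :: r) = false.
Proof.
apply/negP => H; have [_ [_ [h3 [_ [h5 _]]]]] := Hp_consE H.
by move: h5 h3; lia.
Qed.

Lemma Hc_n0 t m : Hc t m 0 = (m == 0).
Proof.
case e: (m == 0).
  rewrite /Hc /= -(cnt_nil 0); apply: cnt_ext => -[|x r]; first by rewrite Hp_nilE e.
  by rewrite Hp_n0_cons.
by apply: cnt0 => -[|x r]; rewrite ?Hp_nilE ?e ?Hp_n0_cons.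
Qed.

Local Open Scope ring_scope.

Lemma coef_natr_poly (b : bool) m : (((b%:R : {poly int}))`_m) = ((b && (m == 0%N)) : nat)%:~R.
Proof. by case: b; rewrite ?coef1 ?coef0 //=; case: (m == 0%N). Qed.

Lemma F_Hc t : forall n m, (Fq t n)`_m = Posz (Hc t m n).
Proof.
elim: t => [|t IHt] n m.
  have := peqP (@Fq_eqn 0 n) (leqnn n).
  rewrite coef_emb leqnn => ->.
  rewrite /qpoch big_ord0 mul1r coef_emb leqnn /= /fone coef_natr_poly Hc0.
  by case: (n == 0%N); case: (m == 0%N).
elim/ltn_ind: n m => n IHn m.
have := F_rec t n; move/(canRL (addrNK _)) => ->.
rewrite !coefD coefXM Hc_rec.
case: (ltnP t n) => h.
  have hn : (n < t.+1)%N = false by rewrite ltnNge h.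
  rewrite hn IHt IHn; last by rewrite subnSK // leq_subr.
  case: m => [|m] /=; rewrite ?addr0 ?IHt ?PoszD; lia.
have hn : (n < t.+1)%N by rewrite ltnS.
rewrite hn !coef0 if_same IHt ?addr0.
by rewrite addn0.
Qed.

Lemma theorem1p1_aux (t : nat) (ht : (0 < t)%N) (m n : nat) :
  ((rhs t n)`_m = if n == 0%N then 0 else Posz (g t m n))%R.
Proof.
elim/ltn_ind: n m => n IHn m.
have := rhs_rec n ht; move/(canRL (addrNK _)) => ->.
rewrite coefD coefB F_Hc coef_natr_poly.
case: n IHn => [|n] IHn.
  rewrite ht coef0 Hc_n0 /=; case: (m == 0%N); rewrite /= ?subrr ?addr0 //.
rewrite g_rec //=.
case: (ltnP n.+1 t) => h.
  have -> : (t < n.+1)%N = false by apply/negbTE; rewrite -leqNgt ltnW.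
  by rewrite coef0 subr0 addr0 addn0.
rewrite IHn; last by rewrite ltn_subrL ht.
case: (ltnP t n.+1) => h2.
  have -> : (n.+1 - t == 0)%N = false by apply/negbTE; rewrite subn_eq0 -ltnNge.
  by rewrite subr0 PoszD.
have -> : (n.+1 - t == 0)%N by rewrite subn_eq0.
by rewrite subr0 addr0 addn0.
Qed.

End PartF.
Import PartF.

Theorem theorem1p1 (t : nat) (ht : (0 < t)%N) (m n : nat) :
  ((rhs t n)`_m = if n == 0%N then 0 else Posz (g t m n))%R.
Proof. exact: (@PartF.theorem1p1_aux t ht m n). Qed.
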